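(* Let $\sigma\colon\Sigma\to\Sigma$ be a topologically mixing two-sided subshift of finite type with a Gibbs measure $\mu$, $f\colon\Sigma\to\mathbb R$ Lipschitz with $\int f\,d\mu=0$, $F(x,r)=(\sigma x,r+f(x))$ and $\nu=\mu\times\mathrm{Leb}$. If $\Phi\in L^\infty(\nu)$ is a global observable, then $\Phi\circ F$ is a global observable and $\nu_{\mathrm{av}}(\Phi\circ F)=\nu_{\mathrm{av}}(\Phi)$.
   Context: A global observable is a $\Phi\in L^\infty(\nu)$ for which the limit $\nu_{\mathrm{av}}(\Phi)=\lim_{R\to\infty}\frac1{2R}\int_{\Sigma\times[-R,R]}\Phi\,d\nu$ exists. Lipschitz is w.r.t. $d_\theta(x,y)=\theta^{\max\{j:\ x_i=y_i\ \forall|i|<j\}}$ for some $0<\theta<1$. *)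

(* Defs.v *)
From HB Require Import structures.
From mathcomp Require Import all_boot all_order all_algebra.
From mathcomp Require Import all_classical all_reals all_analysis.
Set Implicit Arguments. Unset Strict Implicit. Unset Printing Implicit Defensive.
Import Order.TTheory GRing.Theory Num.Theory.
Import numFieldNormedType.Exports.
Local Open Scope classical_set_scope.
Local Open Scope ring_scope.

(* The alphabet is 'I_n.+1 = {0,...,n}; we make it a pointed type so that the
   sequence space can carry a measurable structure. *)
HB.instance Definition _ (n : nat) := isPointed.Build 'I_n.+1 ord0.

Definition cylinders (n : nat) : set (set (int -> 'I_n.+1)) :=
  [set C | exists (m : int) (l : nat) (w : nat -> 'I_n.+1),
     C = [set x | forall j : nat, (j < l)%N -> x (m + j%:Z) = w j]].

Arguments cylinders n : clear implicits.

(* Full two-sided shift space with the Borel (= cylinder-generated) sigma-algebra. *)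
Notation Shift n := (g_sigma_algebraType (cylinders n)).

Definition shift (n : nat) (x : Shift n) : Shift n := fun i => x (i + 1).

Definition SigmaA (n : nat) (A : 'I_n.+1 -> 'I_n.+1 -> bool) : set (Shift n) :=
  [set x | forall i : int, A (x i) (x (i + 1))].

(* x and y agree on all coordinates |i| < j, i.e. d_theta(x,y) <= theta^j. *)
Definition agree (n : nat) (x y : Shift n) (j : nat) : Prop :=
  forall i : int, (absz i < j)%N -> x i = y i.

(* g is Lipschitz on Sigma_A w.r.t. d_theta for some 0 < theta < 1, where
   d_theta(x,y) = theta^(max{j : x_i = y_i for all |i| < j}). *)
Definition lipschitzA (R : realType) (n : nat) (A : 'I_n.+1 -> 'I_n.+1 -> bool)
    (g : Shift n -> R) : Prop :=
  exists theta L : R, 0 < theta < 1 /\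
    forall x y, SigmaA A x -> SigmaA A y ->
      forall j : nat, agree x y j -> `|g x - g y| <= L * theta ^+ j.

(* Open subsets of Sigma_A for the metric d_theta (the topology does not depend
   on theta): every point has a d_theta-ball (a cylinder) around it in U. *)
Definition openA (n : nat) (A : 'I_n.+1 -> 'I_n.+1 -> bool) (U : set (Shift n)) : Prop :=
  U `<=` SigmaA A /\
  forall x, U x -> exists j : nat, forall y, SigmaA A y -> agree x y j -> U y.

Definition topologically_mixing (n : nat) (A : 'I_n.+1 -> 'I_n.+1 -> bool) : Prop :=
  forall U V : set (Shift n), openA A U -> openA A V -> U !=set0 -> V !=set0 ->
    exists N : nat, forall k : nat, (N <= k)%N -> ((iter k (@shift n)) @` U `&` V) !=set0.

Definition cyl0 (n : nat) (x : Shift n) (m : nat) : set (Shift n) :=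
  [set y | forall j : nat, (j < m)%N -> y j%:Z = x j%:Z].

Definition birkhoff (R : realType) (n : nat) (phi : Shift n -> R) (m : nat) (x : Shift n) : R :=
  \sum_(j < m) phi (iter j (@shift n) x).

Definition Gibbs (R : realType) (n : nat) (A : 'I_n.+1 -> 'I_n.+1 -> bool)
    (mu : probability (Shift n) R) : Prop :=
  mu (SigmaA A) = 1%E /\
  (forall B : set (Shift n), measurable B -> mu ((@shift n) @^-1` B) = mu B) /\
  exists phi : Shift n -> R, lipschitzA A phi /\
  exists P C : R, 0 < C /\
    forall x, SigmaA A x -> forall m : nat, (0 < m)%N ->
      ((C^-1 * expR (- (m%:R * P) + birkhoff phi m x))%:E <= mu (cyl0 x m))%E /\
      (mu (cyl0 x m) <= (C * expR (- (m%:R * P) + birkhoff phi m x))%:E)%E.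

Definition nu (R : realType) (n : nat) (mu : probability (Shift n) R) :=
  (mu \x (@lebesgue_measure R))%E.

Definition skew_map (R : realType) (n : nat) (f : Shift n -> R) (z : Shift n * R) : Shift n * R :=
  (shift z.1, z.2 + f z.1).

Definition Linfty (R : realType) (n : nat) (A : 'I_n.+1 -> 'I_n.+1 -> bool)
    (mu : probability (Shift n) R) (Phi : Shift n * R -> R) : Prop :=
  measurable_fun (SigmaA A `*` setT) Phi /\
  exists M : R, {ae nu mu, forall z, `|Phi z| <= M}.

Definition window_avg (R : realType) (n : nat) (A : 'I_n.+1 -> 'I_n.+1 -> bool)
    (mu : probability (Shift n) R) (Phi : Shift n * R -> R) (r : R) : R :=
  (2 * r)^-1 * fine (\int[nu mu]_(z in SigmaA A `*` `[(- r)%R, r]) (Phi z)%:E)%E.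

Definition global_observable (R : realType) (n : nat) (A : 'I_n.+1 -> 'I_n.+1 -> bool)
    (mu : probability (Shift n) R) (Phi : Shift n * R -> R) : Prop :=
  Linfty A mu Phi /\ exists l : R, window_avg A mu Phi r @[r --> +oo] --> l.

Definition nu_av (R : realType) (n : nat) (A : 'I_n.+1 -> 'I_n.+1 -> bool)
    (mu : probability (Shift n) R) (Phi : Shift n * R -> R) : R :=
  lim (window_avg A mu Phi r @[r --> +oo]).

(* Main.v *)
Require Import Defs.
From HB Require Import structures.
From mathcomp Require Import all_boot all_order all_algebra.
From mathcomp Require Import all_classical all_reals all_analysis.
From mathcomp Require Import measurable_realfun.
From mathcomp Require Import zify ring lra.
Import Order.TTheory GRing.Theory Num.Theory.
Import numFieldNormedType.Exports.
Local Open Scope classical_set_scope.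
Local Open Scope ring_scope.

Section S.
Variable n : nat.

Lemma cyl_meas (m : int) (l : nat) (w : nat -> 'I_n.+1) :
  measurable ([set x : Shift n | forall j : nat, (j < l)%N -> x (m + j%:Z) = w j]).
Proof. apply: sub_sigma_algebra; by exists m, l, w. Qed.

Definition word (m : int) (l : nat) (x : Shift n) : seq 'I_n.+1 :=
  [seq x (m + j%:Z) | j <- iota 0 l].

Lemma nth_word m l x j : (j < l)%N -> nth ord0 (word m l x) j = x (m + j%:Z).
Proof. by move=> jl; rewrite /word (nth_map 0%N) ?size_iota // nth_iota. Qed.

Definition ext (m : int) (t : seq 'I_n.+1) : Shift n :=
  fun i => if (m <= i)%R then nth ord0 t `|i - m|%N else ord0.

Lemma ext_win m t (j : nat) : ext m t (m + j%:Z) = nth ord0 t j.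
Proof. by rewrite /ext lerDl addrC addKr. Qed.

Lemma window_measurable (m : int) (l : nat) (S : set (Shift n)) :
  (forall x y, (forall j, (j < l)%N -> x (m + j%:Z) = y (m + j%:Z)) -> S x -> S y) ->
  measurable S.
Proof.
move=> inv.
pose G (k : nat) : set (Shift n) := match @unpickle (seq 'I_n.+1) k with
  | Some t => if `[< S (ext m t) >] then
       [set x : Shift n | forall j : nat, (j < l)%N -> x (m + j%:Z) = nth ord0 t j]
     else set0
  | None => set0 end.
have -> : S = \bigcup_k G k.
  apply/seteqP; split => [x Sx|x [k _]].
    exists (pickle (word m l x)) => //; rewrite /G pickleK.
    have -> : `[< S (ext m (word m l x)) >] = true.
      apply/asboolP; apply: (inv x) => // j jl; by rewrite ext_win nth_word.
    by move=> j jl; rewrite nth_word.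
  rewrite /G; case: (unpickle k) => // t.
  case: asboolP => // St Hx; apply: (inv _ _ _ St) => j jl.
  by rewrite ext_win Hx.
apply: bigcupT_measurable => k; rewrite /G.
case: (unpickle k) => // t; case: asboolP => _ //; exact: cyl_meas.
Qed.

Lemma SigmaA_measurable (A : 'I_n.+1 -> 'I_n.+1 -> bool) : measurable (SigmaA A).
Proof.
pose G (k : nat) : set (Shift n) := match @unpickle int k with
  | Some i => [set x : Shift n | A (x i) (x (i + 1))]
  | None => setT end.
have -> : SigmaA A = \bigcap_k G k.
  apply/seteqP; split => [x Sx k _|x Hx i].
    by rewrite /G; case: (unpickle k) => //.
  by have := Hx (pickle i) I; rewrite /G pickleK.
apply: bigcapT_measurable => k; rewrite /G; case: (unpickle k) => // i.
apply: (window_measurable i 2) => x y H /=.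
have h0 := H 0%N isT; have h1 := H 1%N isT.
by rewrite addr0 in h0; rewrite h0 h1.
Qed.

Lemma shift_measurable : measurable_fun setT (@Defs.shift n).
Proof.
apply: (@measurability _ _ (Shift n) (Shift n) setT (@Defs.shift n) (cylinders n) erefl).
move=> _ [C [m [l [w ->]]] <-].
apply: (window_measurable (m + 1) l) => x y H [_ /= Hx].
split => // j jl; rewrite /Defs.shift -(Hx j jl) /Defs.shift addrAC.
by rewrite (H j jl).
Qed.

Lemma SigmaA_shift (A : 'I_n.+1 -> 'I_n.+1 -> bool) x :
  SigmaA A (@Defs.shift n x) <-> SigmaA A x.
Proof.
split => H i.
  by have := H (i - 1); rewrite /Defs.shift subrK.
by rewrite /Defs.shift; apply: H.
Qed.

Lemma geom_small (R : realType) (L t e : R) : 0 < t < 1 -> 0 < e -> exists j : nat, L * t ^+ j < e.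
Proof.
move=> /andP[t0 t1] e0.
have [L0|L0] := lerP L 0.
  exists 0%N; rewrite expr0 mulr1; exact: le_lt_trans L0 e0.
have c : t ^+ j @[j --> \oo] --> (0:R).
  apply: cvg_expr; rewrite ger0_norm //; exact: ltW.
have [N _ HN] := cvgr_lt _ c (e / L) (divr_gt0 e0 L0).
exists N; have := HN N (leqnn N) => /=.
by rewrite ltr_pdivlMr // mulrC.
Qed.
Lemma absz_test (i : int) (j : nat) : `|i| < j%:Z -> (absz (i + j%:Z)%R < 2 * j)%N /\ i = - j%:Z + (absz (i + j%:Z)%R)%:Z.
Proof. move=> h. split; lia. Qed.

Lemma agree_win (x y : Shift n) (j : nat) :
  (forall k, (k < 2 * j)%N -> x (- j%:Z + k%:Z) = y (- j%:Z + k%:Z)) -> agree x y j.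
Proof.
move=> H i hi.
have [h1 h2] : (absz (i + j%:Z)%R < 2 * j)%N /\ i = - j%:Z + (absz (i + j%:Z)%R)%:Z by lia.
by rewrite h2; apply: H.
Qed.

Lemma lip_meas (R : realType) (A : 'I_n.+1 -> 'I_n.+1 -> bool) (g : Shift n -> R) :
  lipschitzA A g -> measurable_fun (SigmaA A) g.
Proof.
move=> [th [L [th01 Hl]]].
apply: (measurability (aT := Shift n) (D:=SigmaA A) (f:=g) _ (measurable_realfun.RGenInftyO.measurableE R)).
move=> _ [_ [a ->] <-].
pose D j := [set x : Shift n | forall y, SigmaA A y -> agree x y j -> g y < a].
have -> : SigmaA A `&` g @^-1` `]-oo, a[ = SigmaA A `&` \bigcup_j D j.
  apply/seteqP; split => [x [Sx]|x [Sx [j _ Dx]]].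
    rewrite /= in_itv /= => gxa; split => //.
    have e0 : 0 < a - g x by rewrite subr_gt0.
    have [j Hj] := @geom_small _ L th _ th01 e0.
    exists j => // y Sy axy.
    have := Hl x y Sx Sy j axy => h.
    have h2 := le_lt_trans h Hj.
    have h3 := ler_norm (g y - g x); rewrite distrC in h2.
    lra.
  split => //=; rewrite in_itv /=; apply: Dx => //.
apply: measurableI; first exact: SigmaA_measurable.
apply: bigcupT_measurable => j.
apply: (window_measurable (- j%:Z) (2 * j)) => x y H Dx z Sz ayz.
apply: Dx => // i hi; rewrite -(ayz i hi).
exact: (@agree_win x y j H i hi).
Qed.
End S.

Lemma leb_transl (R : realType) (c : R) (E : set R) : measurable E ->
  lebesgue_measure ((fun x : R => x + c) @^-1` E) = lebesgue_measure E.
Proof.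
move=> mE.
have mc : measurable_fun setT (fun x : measurableTypeR R => x + c : measurableTypeR R).
  by apply: measurable_funD => //; exact: measurable_cst.
apply/esym; apply: (@lebesgue_measure_unique _ (pushforward lebesgue_measure (fun x : measurableTypeR R => x + c : measurableTypeR R))) => //.
move=> _ [[a b] _ <-] /=; rewrite /pushforward.
have -> : (fun x : R => x + c) @^-1` `]a, b]%classic = `]a - c, b - c]%classic.
  apply/seteqP; split => x /=; rewrite !in_itv /= => /andP[h1 h2];
    apply/andP; split; lra.
rewrite !lebesgue_measure_itv /= !lte_fin ltrD2r; case: ifP => // _; rewrite -!EFinD; congr (_%:E); ring.
Qed.


Section Main.
Variables (R : realType) (n : nat) (A : 'I_n.+1 -> 'I_n.+1 -> bool)
  (mu : probability (Shift n) R) (f : Shift n -> R).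
Hypothesis HS : mu (SigmaA A) = 1%E.
Hypothesis Hsh : forall B : set (Shift n), measurable B -> mu ((@Defs.shift n) @^-1` B) = mu B.
Hypothesis Hlip : lipschitzA A f.

Let Sg := SigmaA A.
Definition fp : Shift n -> R := f \_ Sg.
Notation RR := (measurableTypeR R).
Definition Fp (z : Shift n * RR) : Shift n * RR := (Defs.shift z.1, z.2 + fp z.1).

Lemma fp_meas : measurable_fun setT fp.
Proof.
exact: (proj1 (measurable_restrictT f (@SigmaA_measurable n A)) (@lip_meas n R A f Hlip)).
Qed.

Lemma Fp_meas0 : measurable_fun setT (Fp : Shift n * R -> Shift n * R).
Proof.
apply: measurable_fun_pair.
  apply: measurableT_comp; [exact: shift_measurable | exact: measurable_fst].
apply: measurable_funD; first exact: measurable_snd.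
apply: measurableT_comp; [exact: fp_meas | exact: measurable_fst].
Qed.


Lemma Fp_meas : measurable_fun setT Fp.
Proof. exact: Fp_meas0. Qed.

Local Open Scope ereal_scope.

Lemma nu_pres (E : set (Shift n * RR)) : measurable E -> nu mu (Fp @^-1` E) = nu mu E.
Proof.
move=> mE; rewrite /nu /product_measure1 /=.
have mphi : measurable_fun setT (lebesgue_measure \o xsection E).
  exact: measurable_fun_xsection.
transitivity (\int[mu]_x ((lebesgue_measure \o xsection E) (Defs.shift x))).
  apply: eq_integral => x _ /=.
  have -> : xsection (Fp @^-1` E) x = (fun s : R => (s + fp x)%R) @^-1` (xsection E (Defs.shift x)).
    by apply/seteqP; split => s; rewrite /xsection /Fp /=.
  rewrite leb_transl //; exact: measurable_xsection.
have := @ge0_integral_pushforward _ _ _ _ _ _ (@shift_measurable n) mu setT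
  (lebesgue_measure \o xsection E) measurableT mphi (fun y _ => measure_ge0 _ _).
rewrite preimage_setT => <-.
pose pm := measure_function_pushforward__canonical__measure_function_Measure mu (@shift_measurable n).
exact: (@eq_measure_integral _ _ _ setT mu pm _ (fun B mB _ => Hsh B mB)).
Qed.


Lemma int_pres0 (D : set (Shift n * RR)) (g : Shift n * RR -> \bar R) :
  measurable D -> measurable_fun D g -> (forall z, D z -> 0 <= g z) ->
  \int[nu mu]_(z in D) g z = \int[nu mu]_(z in Fp @^-1` D) (g \o Fp) z.
Proof.
move=> mD mg g0.
rewrite -(@ge0_integral_pushforward _ _ _ _ _ _ Fp_meas (nu mu) D g mD mg); last first.
  by move=> z /[!inE]; exact: g0.
pose pm := measure_function_pushforward__canonical__measure_function_Measure (nu mu) Fp_meas.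
rewrite (eq_measure_integral pm) // => B mB _; rewrite /pm /= /pushforward. have := nu_pres B mB. rewrite /nu. move=> ->. by [].
Qed.

Lemma int_pres (D : set (Shift n * RR)) (g : Shift n * RR -> \bar R) :
  measurable D -> measurable_fun D g ->
  \int[nu mu]_(z in D) g z = \int[nu mu]_(z in Fp @^-1` D) (g \o Fp) z.
Proof.
move=> mD mg.
rewrite integralE [RHS]integralE.
rewrite (int_pres0 D (g^\+) mD); [|exact: measurable_funepos|by move=> *; exact: funepos_ge0].
rewrite (int_pres0 D (g^\-) mD) //.
- by rewrite -funepos_comp -funeneg_comp.
- exact: (measurable_funeneg mg).
Qed.


Lemma Sg_meas : measurable Sg.
Proof. exact: SigmaA_measurable. Qed.

Lemma SgT_meas : measurable (Sg `*` (setT : set RR)).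
Proof. apply: measurableX => //; exact: Sg_meas. Qed.

Lemma Fp_pre_SgT : Fp @^-1` (Sg `*` (setT : set RR)) = Sg `*` setT.
Proof.
apply/seteqP; split => -[x s] /= [h _]; split => //; move: h; rewrite /Sg.
  by move/SigmaA_shift.
by move/(SigmaA_shift n A x).
Qed.

Lemma skew_Fp (z : Shift n * RR) : Sg z.1 -> skew_map f z = Fp z.
Proof.
by move=> h; rewrite /skew_map /Fp /fp /patch mem_set.
Qed.

Lemma muC : mu (~` Sg) = 0.
Proof. by rewrite probability_setC ?HS ?subee //; exact: Sg_meas. Qed.

Lemma nuC : nu mu (~` Sg `*` (setT : set RR)) = 0.
Proof.
rewrite /nu product_measure1E //; last by apply: measurableC; exact: Sg_meas.
by rewrite (_ : _ (~` Sg) = 0) ?mul0e //; exact: muC.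
Qed.

Lemma ae_Fp (P : Shift n * RR -> Prop) :
  {ae nu mu, forall z, P z} -> {ae nu mu, forall z, P (Fp z)}.
Proof.
move=> [N [mN N0 sub]]; exists (Fp @^-1` N); split.
- by rewrite -[X in measurable X]setTI; apply: Fp_meas.
- by rewrite nu_pres.
- by move=> z /= hz; apply: sub.
Qed.


Lemma fp_bound : exists B, (0 <= B)%R /\ forall x, (`|fp x| <= B)%R.
Proof.
have [x0 Sx0] : Sg !=set0.
  apply/set0P/negP => /eqP h0; rewrite /Sg in h0.
  by move: (HS); rewrite h0 measure0 => /esym/eqP; rewrite onee_eq0.
move: Hlip => [th [L [th01 Hl]]].
exists (`|f x0| + `|L|)%R; split; first by rewrite addr_ge0.
move=> x; rewrite /fp /patch; case: ifPn => [/set_mem Sx|_].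
  have := Hl x x0 Sx Sx0 0%N (fun i hi => False_ind _ (notF hi)).
  rewrite expr0 mulr1 => h.
  have h1 := ler_norm L.
  have h2 : (`|f x| <= `|f x0| + `|f x - f x0|)%R.
    by rewrite -[X in (`|X| <= _)%R](subrK (f x0) (f x)) addrC ler_normD.
  lra.
rewrite normr0 /=; exact: addr_ge0.
Qed.

Variables (Phi : Shift n * RR -> R) (M : R).
Hypothesis HPm : measurable_fun (Sg `*` setT) Phi.
Hypothesis HPb : {ae nu mu, forall z, (`|Phi z| <= M)%R}.

Let h (z : Shift n * RR) : \bar R := (Phi (Fp z))%:E.

Lemma h_meas : measurable_fun (Sg `*` setT) h.
Proof.
apply/measurable_EFinP.
apply: (measurable_comp SgT_meas _ HPm).
  move=> _ [z hz <-]; have : (Fp @^-1` (Sg `*` (setT : set RR))) z by rewrite Fp_pre_SgT.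
  by [].
exact: measurable_funTS Fp_meas.
Qed.

Lemma int_boundS (X : set (Shift n * RR)) (S : set RR) (c : R) :
  measurable X -> measurable S -> X `<=` Sg `*` S -> lebesgue_measure S <= c%:E ->
  `| \int[nu mu]_(z in X) h z | <= (`|M| * c)%:E.
Proof.
move=> mX mS XS Sc.
have XT : X `<=` Sg `*` setT by move=> z /XS [? _].
have mhX : measurable_fun X h := measurable_funS SgT_meas XT h_meas.
apply: (le_trans (le_abse_integral _ mX mhX)).
apply: (@le_trans _ _ (\int[nu mu]_(z in X) cst (`|M|%:E) z)).
  apply: ae_ge0_le_integral => //.
  - by apply: measurableT_comp => //.
  - by move=> z _ /=; rewrite lee_fin.
  - case: (ae_Fp _ HPb) => N [mN N0 sub]; exists N; split => // z /= hz; apply: sub => /= hb.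
    apply: hz => _; rewrite lee_fin; exact: (le_trans hb (ler_norm M)).
rewrite integral_cst // EFinM.
apply: lee_wpmul2l; first by rewrite lee_fin.
apply: (@le_trans _ _ (nu mu (Sg `*` S))).
  apply: le_measure => //; rewrite inE //; apply: measurableX => //; exact: Sg_meas.
rewrite /nu product_measure1E //; last exact: Sg_meas.
rewrite (_ : _ Sg = 1) ?mul1e //; exact: HS.
Qed.


Lemma fin_of_bound (x : \bar R) (c : R) : `|x| <= c%:E -> x \is a fin_num /\ (`|fine x| <= c)%R.
Proof. by case: x => [r| |] //=; rewrite lee_fin. Qed.

Definition Hr (r : R) : set (Shift n * RR) := Sg `*` `[(- r)%R, r]%classic.
Definition Gr (r : R) : set (Shift n * RR) := Fp @^-1` Hr r.

Lemma Hr_meas r : measurable (Hr r).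
Proof. apply: measurableX => //; exact: Sg_meas. Qed.

Lemma Gr_meas r : measurable (Gr r).
Proof. by rewrite /Gr -[X in measurable X]setTI; apply: Fp_meas => //; exact: Hr_meas. Qed.

Lemma Hr_SgT r : Hr r `<=` Sg `*` setT.
Proof. by move=> z [? _]. Qed.

Lemma Gr_SgT r : Gr r `<=` Sg `*` setT.
Proof.
move=> z hz; have : (Fp @^-1` (Sg `*` (setT : set RR))) z.
  by case: hz => [h1 _]; split.
by rewrite Fp_pre_SgT.
Qed.

Definition Sr (r B : R) : set RR :=
  `[(- r - B)%R, (- r + B)%R]%classic `|` `[(r - B)%R, (r + B)%R]%classic.

Lemma HG_S r B : (forall x, `|fp x| <= B)%R ->
  (Hr r `\` Gr r `<=` Sg `*` Sr r B) /\ (Gr r `\` Hr r `<=` Sg `*` Sr r B).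
Proof.
move=> hB; split => -[x s] [hH hG].
- case: hH => /= Sx; rewrite in_itv /= => /andP[s1 s2]; split => //.
  have hx := hB x; rewrite ler_norml in hx; case/andP: hx => hx1 hx2.
  have nG : ~ (`[(- r)%R, r]%classic (s + fp x)%R).
    by move=> h'; apply: hG; split => //=; apply/(SigmaA_shift n A x).
  rewrite /= in_itv /= in nG.
  have [h1|h1] := lerP (- r)%R (s + fp x)%R.
    have h2 : (r < s + fp x)%R by rewrite ltNge; apply/negP => h3; apply: nG; rewrite h1 h3.
    by right; rewrite /= in_itv /=; apply/andP; split; lra.
  by left; rewrite /= in_itv /=; apply/andP; split; lra.
- case: hH => /= Sx; rewrite in_itv /= => /andP[s1 s2].
  have Sx' : Sg x by apply/(SigmaA_shift n A x).
  split => //.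
  have hx := hB x; rewrite ler_norml in hx; case/andP: hx => hx1 hx2.
  have nH : ~ (`[(- r)%R, r]%classic s) by move=> h'; apply: hG; split.
  rewrite /= in_itv /= in nH.
  have [h1|h1] := lerP (- r)%R s.
    have h2 : (r < s)%R by rewrite ltNge; apply/negP => h3; apply: nH; rewrite h1 h3.
    by right; rewrite /= in_itv /=; apply/andP; split; lra.
  by left; rewrite /= in_itv /=; apply/andP; split; lra.
Qed.


Lemma leb_cc (a b : R) : (a <= b)%R -> lebesgue_measure (`[a, b]%classic : set RR) = (b - a)%:E.
Proof.
move=> ab; rewrite lebesgue_measure_itv /= lte_fin.
case: ifPn => [_|]; first by rewrite EFinB.
rewrite -leNgt => ba.
have -> : a = b by apply/eqP; rewrite eq_le ab ba.
by rewrite subrr.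
Qed.

Lemma leb_S r B : (0 <= B)%R -> lebesgue_measure (Sr r B) <= (4 * B)%:E.
Proof.
move=> B0; apply: (le_trans (measureU2 _ _ _)) => //.
change (lebesgue_measure (`[(- r - B)%R, (- r + B)%R]%classic : set RR) +
  lebesgue_measure (`[(r - B)%R, (r + B)%R]%classic : set RR) <= (4 * B)%:E).
rewrite !leb_cc; [|lra|lra]; rewrite -EFinD lee_fin; lra.
Qed.

Lemma key r B : (0 <= r)%R -> (0 <= B)%R -> (forall x, `|fp x| <= B)%R ->
  [/\ \int[nu mu]_(z in Hr r) h z \is a fin_num, \int[nu mu]_(z in Gr r) h z \is a fin_num &
   (`|fine (\int[nu mu]_(z in Hr r) h z) - fine (\int[nu mu]_(z in Gr r) h z)| <= `|M| * (8 * B))%R].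
Proof.
move=> r0 B0 hB.
have mI := measurableI _ _ (Hr_meas r) (Gr_meas r).
have mHG := measurableD (Hr_meas r) (Gr_meas r).
have mGH := measurableD (Gr_meas r) (Hr_meas r).
have eI : \int[nu mu]_(z in Hr r) h z =
    \int[nu mu]_(z in Hr r `&` Gr r) h z + \int[nu mu]_(z in Hr r `\` Gr r) h z.
  rewrite -{1}(setUIDK (Hr r) (Gr r)); apply: integral_setU => //.
  - rewrite setUIDK; exact: measurable_funS SgT_meas (Hr_SgT r) h_meas.
  - by apply/disj_setPS => z [[_ a] [_ b]].
have eJ : \int[nu mu]_(z in Gr r) h z =
    \int[nu mu]_(z in Hr r `&` Gr r) h z + \int[nu mu]_(z in Gr r `\` Hr r) h z.
  rewrite [in X in X + _]setIC -{1}(setUIDK (Gr r) (Hr r)); apply: integral_setU => //.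
  - by rewrite setIC.
  - rewrite setUIDK; exact: measurable_funS SgT_meas (Gr_SgT r) h_meas.
  - by apply/disj_setPS => z [[_ a] [_ b]].
have [hS1 hS2] := HG_S r B hB.
have mSr : measurable (Sr r B) by apply: measurableU.
have lr : lebesgue_measure (`[(- r)%R, r]%classic : set RR) <= (r - - r)%:E.
  by rewrite leb_cc //; lra.
have [fa _] := fin_of_bound _ _ (int_boundS (Hr r `&` Gr r) _ _ mI (measurable_itv `[(- r)%R, r])
   (fun z hz => proj1 hz) lr).
have [fb bb] := fin_of_bound _ _ (int_boundS (Hr r `\` Gr r) _ _ mHG mSr hS1 (leb_S r B B0)).
have [fc bc] := fin_of_bound _ _ (int_boundS (Gr r `\` Hr r) _ _ mGH mSr hS2 (leb_S r B B0)).
rewrite eI eJ.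
move: fa fb fc bb bc.
set a := \int[nu mu]_(z in Hr r `&` Gr r) h z.
set b := \int[nu mu]_(z in Hr r `\` Gr r) h z.
set c := \int[nu mu]_(z in Gr r `\` Hr r) h z.
move=> fa fb fc bb bc.
split; [by rewrite fin_numD fa fb|by rewrite fin_numD fa fc|].
rewrite (fineD fa fb) (fineD fa fc) opprD addrACA subrr add0r.
apply: (le_trans (ler_normB _ _)).
have hM := normr_ge0 M.
nra.
Qed.


Lemma main_Linfty : Linfty A mu (Phi \o skew_map f).
Proof.
split.
  have mPF : measurable_fun (Sg `*` setT) (Phi \o Fp).
    apply: (measurable_comp SgT_meas _ HPm (measurable_funTS Fp_meas)).
    move=> _ [z hz <-]; have : (Fp @^-1` (Sg `*` (setT : set RR))) z by rewrite Fp_pre_SgT.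
    by [].
  apply: (eq_measurable_fun _ _ mPF) => z /[!inE] -[hz _].
  by rewrite /= skew_Fp.
exists M.
case: (ae_Fp _ HPb) => N [mN N0 sub].
have mC : measurable (~` Sg `*` (setT : set RR)).
  by apply: measurableX => //; apply: measurableC; exact: Sg_meas.
exists (N `|` (~` Sg `*` setT)); split.
- exact: measurableU.
- exact: (etrans (@measureU0 _ _ _ (nu mu) N _ mN mC nuC) N0).
- move=> z /= hz; have [Sz|nSz] := pselect (Sg z.1).
    by left; apply: sub => /= hb; apply: hz; rewrite /= skew_Fp.
  by right.
Qed.


Lemma avg_skew r : window_avg A mu (Phi \o skew_map f) r =
  ((2 * r)^-1 * fine (\int[nu mu]_(z in Hr r) h z))%R.
Proof.
rewrite /window_avg; congr (_ * fine _)%R.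
apply: eq_integral => z /[!inE] -[hz _].
by rewrite /h /= skew_Fp.
Qed.

Lemma avg_phi r : window_avg A mu Phi r =
  ((2 * r)^-1 * fine (\int[nu mu]_(z in Gr r) h z))%R.
Proof.
rewrite /window_avg; congr (_ * fine _)%R.
have := int_pres (Hr r) (fun z => (Phi z)%:E) (Hr_meas r).
rewrite /Gr /h => <- //.
apply/measurable_EFinP; exact: measurable_funS SgT_meas (Hr_SgT r) HPm.
Qed.


Local Close Scope ereal_scope.
Lemma main_cvg (l : R) : window_avg A mu Phi r @[r --> +oo] --> l ->
  window_avg A mu (Phi \o skew_map f) r @[r --> +oo] --> l.
Proof.
move=> Hl.
have [B [B0 hB]] := fp_bound.
pose d r := (window_avg A mu (Phi \o skew_map f) r - window_avg A mu Phi r)%R.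
have -> : (fun r => window_avg A mu (Phi \o skew_map f) r) =
    (fun r => window_avg A mu Phi r + d r)%R.
  by apply/funext => r; rewrite /d addrC subrK.
rewrite -[l]addr0; apply: cvgD => //.
apply/cvgr0Pnorm_lt => e e0.
near=> r.
have r0 : (0 < r)%R by near: r; apply: nbhs_pinfty_gt; rewrite num_real.
have rC : (`|M| * (8 * B) / e < r)%R by near: r; apply: nbhs_pinfty_gt; rewrite num_real.
have [_ _ kb] := key r B (ltW r0) B0 hB.
rewrite /d avg_skew avg_phi -mulrBr normrM.
have r2 : (0 < 2 * r)%R by rewrite mulr_gt0.
rewrite ger0_norm ?invr_ge0 ?(ltW r2) // mulrC ltr_pdivrMr //.
rewrite ltr_pdivrMr // in rC.
nra.
Unshelve. all: end_near.
Qed.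

End Main.

Theorem lemma3p2 (R : realType) (n : nat) (A : 'I_n.+1 -> 'I_n.+1 -> bool)
    (mu : probability (Shift n) R) (f : Shift n -> R)
    (Phi : Shift n * R -> R) :
  topologically_mixing A ->
  Gibbs A mu ->
  lipschitzA A f ->
  (\int[mu]_(x in SigmaA A) (f x)%:E)%E = 0%E ->
  global_observable A mu Phi ->
  global_observable A mu (Phi \o skew_map f) /\
  nu_av A mu (Phi \o skew_map f) = nu_av A mu Phi.
Proof.
move=> _ [HS [Hsh _]] Hlip _ [[HPm [M HPb]] [l Hl]].
have c := main_cvg R n A mu f HS Hsh Hlip Phi M HPm HPb l Hl.
split.
  split; first exact: (main_Linfty R n A mu f HS Hsh Hlip Phi M HPm HPb).
  by exists l.
rewrite /nu_av (cvg_lim _ c) ?(cvg_lim _ Hl) //.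
Qed.
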